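(* Let $p$ and $r$ be states such that $\beta(p)$ tightly thermomajorizes $\beta(r)$. Then there exist a biplanar extremal thermal process $T\in TP(d)$ with $Tp=r$, a $\beta$-order $\lambda$ of $p$ and a $\beta$-order $\mu$ of $r$ such that the drawing of $G(T)$ with left ordering $\lambda$ and right ordering $\mu$ is plain (i.e. one may take $\pi_{in}(T)=\lambda$, $\pi_{out}(T)=\mu$). If moreover the ratios $p_i/g_i$ are pairwise distinct, then $T$ is the only element of $TP(d)$ satisfying $Tp=r$.
   Context: Fix $d\ge 2$, $\beta\in(0,\infty)$ and pairwise distinct reals $E_0=0,E_1,\dots,E_{d-1}$. Put $q_{m,n}=e^{-\beta(E_m-E_n)}$, $Z=\sum_j q_{j,0}$, $g_i=q_{i,0}/Z$. A state is a probability vector in $\mathbb{R}^d$. $TP(d)$ is the set of $d\times d$ real matrices with non-negative entries, columns summing to $1$, and $Tg=g$; an extremal thermal process is an extreme point of the convex set $TP(d)$. $\beta$-order and curve: for a state $p$, a permutation $\pi$ of $\{0,\dots,d-1\}$ with $p_{\pi(0)}/g_{\pi(0)}\ge\dots\ge p_{\pi(d-1)}/g_{\pi(d-1)}$ gives the $\beta$-order $(\pi(0),\dots,\pi(d-1))$; with $x_k=\sum_{i\le k}g_{\pi(i)}$, $y_k=\sum_{i\le k}p_{\pi(i)}$, the thermomajorization curve $\beta(p)$ is the graph of the concave piecewise-linear function on $[0,1]$ through $(0,0),(x_0,y_0),\dots,(x_{d-1},y_{d-1})=(1,1)$; its elbows are $(x_k,y_k)$, $k=0,\dots,d-2$. $\beta(p)$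 tightly thermomajorizes $\beta(r)$ if every elbow of $\beta(r)$ lies on $\beta(p)$. Graphs: for $T\in TP(d)$, $G(T)$ is the bipartite graph with left vertices $L_0,\dots,L_{d-1}$ (columns), right vertices $R_0,\dots,R_{d-1}$ (rows), and an edge $\{L_j,R_i\}$ iff $T_{ij}>0$ (this is the support graph of the transportation matrix $T\,\mathrm{diag}(q_{0,0},\dots,q_{d-1,0})$). Given orderings $\lambda=(\lambda_0,\dots,\lambda_{d-1})$ and $\mu=(\mu_0,\dots,\mu_{d-1})$ (permutations of $\{0,\dots,d-1\}$), place $L_{\lambda_a}$ at height $a$ on one vertical line and $R_{\mu_b}$ at height $b$ on a parallel line and draw edges as straight segments; the drawing is plain if there are no two edges $\{L_{\lambda_a},R_{\mu_b}\}$, $\{L_{\lambda_{a'}},R_{\mu_{b'}}\}$ with $a<a'$ and $b>b'$. An extremal thermal process $T$ is biplanar if some pair $(\lambda,\mu)$ gives a plain drawing; such $\lambda,\mu$ are called orders $\pi_{in}(T),\pi_{out}(T)$ of $T$. *)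

(* Defs.v *)
From HB Require Import structures.
From mathcomp Require Import all_boot all_order all_algebra.
From mathcomp Require Import mathcomp_extra reals.
From mathcomp Require Import sequences.
From mathcomp Require Import perm.
Set Implicit Arguments. Unset Strict Implicit. Unset Printing Implicit Defensive.
Import Order.TTheory GRing.Theory Num.Theory.
Local Open Scope ring_scope.

Section ThermoDefs.
Variables (R : realType) (d : nat).

Definition qf (beta : R) (E : 'I_d -> R) (m n : 'I_d) : R :=
  expR (- (beta * (E m - E n))).

(* Gibbs state g_i = q_{i,0} / Z, Z = sum_j q_{j,0}; i0 is the index 0. *)
Definition gibbs (beta : R) (E : 'I_d -> R) (i0 : 'I_d) (i : 'I_d) : R :=
  qf beta E i i0 / \sum_(j < d) qf beta E j i0.

Definition is_state (p : 'I_d -> R) : Prop :=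
  (forall i, 0 <= p i) /\ \sum_(i < d) p i = 1.

Definition mxapp (T : 'M[R]_d) (p : 'I_d -> R) : 'I_d -> R :=
  fun i => \sum_(j < d) T i j * p j.

Definition in_TP (g : 'I_d -> R) (T : 'M[R]_d) : Prop :=
  (forall i j, 0 <= T i j) /\
  (forall j, \sum_(i < d) T i j = 1) /\
  mxapp T g = g.

Definition extremal_TP (g : 'I_d -> R) (T : 'M[R]_d) : Prop :=
  in_TP g T /\
  forall (T1 T2 : 'M[R]_d) (t : R), in_TP g T1 -> in_TP g T2 -> 0 < t -> t < 1 ->
    T = t *: T1 + (1 - t) *: T2 -> T1 = T /\ T2 = T.

Definition beta_order (g p : 'I_d -> R) (pi : {perm 'I_d}) : Prop :=
  forall a b : 'I_d, (a <= b)%N -> p (pi b) / g (pi b) <= p (pi a) / g (pi a).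

Definition psum (pi : {perm 'I_d}) (v : 'I_d -> R) (k : nat) : R :=
  \sum_(i < d | (i < k)%N) v (pi i).

(* (x, y) lies on the thermomajorization curve beta(p): it lies on the
   segment from (x_{k-1}, y_{k-1}) to (x_k, y_k) for some k (with
   (x_{-1}, y_{-1}) = (0,0)), the points being computed along a beta-order
   of p (all beta-orders of p give the same curve). *)
Definition on_curve (g p : 'I_d -> R) (x y : R) : Prop :=
  exists pi : {perm 'I_d}, beta_order g p pi /\
  exists k : 'I_d,
    psum pi g k <= x /\ x <= psum pi g k.+1 /\
    y = psum pi p k + (p (pi k) / g (pi k)) * (x - psum pi g k).

(* beta(p) tightly thermomajorizes beta(r): every elbow (x_k, y_k),
   k = 0..d-2, of beta(r) (for a beta-order of r) lies on beta(p). *)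
Definition tightly_thermomajorizes (g p r : 'I_d -> R) : Prop :=
  exists mu : {perm 'I_d}, beta_order g r mu /\
  forall k : nat, (k.+1 < d)%N ->
    on_curve g p (psum mu g k.+1) (psum mu r k.+1).

(* plain drawing of G(T) with left ordering lam and right ordering mu:
   L_{lam a} at height a, R_{mu b} at height b, edge {L_j,R_i} iff T i j > 0. *)
Definition plain_drawing (T : 'M[R]_d) (lam mu : {perm 'I_d}) : Prop :=
  forall a a' b b' : 'I_d, (a < a')%N -> (b' < b)%N ->
    0 < T (mu b) (lam a) -> 0 < T (mu b') (lam a') -> False.

Definition biplanar (g : 'I_d -> R) (T : 'M[R]_d) : Prop :=
  extremal_TP g T /\ exists lam mu : {perm 'I_d}, plain_drawing T lam mu.

End ThermoDefs.

(* Main.v *)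
Require Import Defs.
From HB Require Import structures.
From mathcomp Require Import all_boot all_order all_algebra.
From mathcomp Require Import mathcomp_extra reals.
From mathcomp Require Import sequences.
From mathcomp Require Import perm.
From mathcomp Require Import ring lra.
From Stdlib Require Import FunctionalExtensionality.
Import Order.TTheory GRing.Theory Num.Theory.
Local Open Scope ring_scope.
Set Implicit Arguments. Unset Strict Implicit. Unset Printing Implicit Defensive.

Section Ov.
Variable R : realFieldType.
Definition ov (s t u v : R) : R := Num.max 0 (Num.min t v - Num.max s u).
Ltac nomm x := lazymatch x with
 | context [Order.max _ _] => fail | context [Order.min _ _] => fail | _ => idtac end.
Ltac mm := repeat match goal with
 | |- context [Order.max ?x ?y] => nomm x; nomm y; case: (leP x y) => ?
 | |- context [Order.min ?x ?y] => nomm x; nomm y; case: (leP x y) => ?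
 end.
Lemma ov_add s t u m v : u <= m -> m <= v -> ov s t u m + ov s t m v = ov s t u v.
Proof. move=> h1 h2; rewrite /ov; mm; lra. Qed.
Lemma ov_uu s t u : ov s t u u = 0.
Proof. rewrite /ov; mm; lra. Qed.
Lemma ov_sym s t u v : ov s t u v = ov u v s t.
Proof. by rewrite /ov (minC t v) (maxC s u). Qed.
Lemma ov_ge0 s t u v : 0 <= ov s t u v.
Proof. rewrite /ov; mm; lra. Qed.
Lemma ov_le s t u v : s <= t -> ov s t u v <= t - s.
Proof. move=> h; rewrite /ov; mm; lra. Qed.
Lemma ov_z1 s t u v : t <= u -> ov s t u v = 0.
Proof. move=> h; rewrite /ov; mm; lra. Qed.
Lemma ov_z2 s t u v : v <= s -> ov s t u v = 0.
Proof. move=> h; rewrite /ov; mm; lra. Qed.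
Lemma ov_in s t u v : u <= s -> s <= t -> t <= v -> ov s t u v = t - s.
Proof. move=> h1 h2 h3; rewrite /ov; mm; lra. Qed.
Lemma ov_mid s t x : 0 <= s -> s <= x -> x <= t -> ov s t 0 x = x - s.
Proof. move=> h1 h2 h3; rewrite /ov; mm; lra. Qed.
Lemma ov_pos s t u v : 0 < ov s t u v -> u < t /\ s < v.
Proof. rewrite /ov; mm; lra. Qed.

Variable d : nat.
Lemma sumS (F : 'I_d -> R) n (h : (n < d)%N) :
  \sum_(i < d | (i < n.+1)%N) F i = \sum_(i < d | (i < n)%N) F i + F (Ordinal h).
Proof.
rewrite (bigD1 (Ordinal h)) //= addrC; congr (_ + _).
apply: eq_bigl => i; rewrite ltnS leq_eqVlt -val_eqE /=.
by case: (ltngtP i n).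
Qed.
Lemma Cmono (C : nat -> R) (hC : forall n, C n <= C n.+1) m n : (m <= n)%N -> C m <= C n.
Proof.
elim: n => [|n IH]; first by rewrite leqn0 => /eqP ->.
rewrite leq_eqVlt ltnS => /orP [/eqP -> //|/IH h]; exact: le_trans h (hC n).
Qed.
Lemma ov_sum (C : nat -> R) (hC : forall n, C n <= C n.+1) s t n : (n <= d)%N ->
  \sum_(b < d | (b < n)%N) ov s t (C b) (C b.+1) = ov s t (C 0%N) (C n).
Proof.
elim: n => [_|n IH h].
  by rewrite big_pred0 ?ov_uu // => i; rewrite ltn0.
rewrite (sumS (fun b : 'I_d => ov s t (C b) (C b.+1)) h) /= IH ?(ltnW h) //.
apply: ov_add; [exact: Cmono | exact: hC].
Qed.
Lemma complete (f h : 'I_d -> R) k : \sum_a f a = \sum_a h a ->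
  (forall a, a != k -> f a = h a) -> forall a, f a = h a.
Proof.
move=> hs hne a; case: (eqVneq a k) => [->|]; last exact: hne.
move: hs; rewrite (bigD1 k) //= [RHS](bigD1 k) //= (eq_bigr _ (fun a h => hne a h)).
by move/addIr.
Qed.
Lemma sum_sub_le (F : 'I_d -> R) (P : pred 'I_d) : (forall i, 0 <= F i) ->
  \sum_(i | P i) F i <= \sum_i F i.
Proof.
move=> h; rewrite big_mkcond /=; apply: ler_sum => i _; case: (P i) => //.
Qed.
End Ov.

Section Sig.
Variables (R : realType) (d : nat) (g p : 'I_d -> R).
Hypotheses (gpos : forall i, 0 < g i) (gsum : \sum_i g i = 1) (hd0 : (0 < d)%N).

Lemma gne0 i : g i != 0. Proof. by rewrite gt_eqF. Qed.

Lemma psum0 (s : {perm 'I_d}) (v : 'I_d -> R) : psum s v 0 = 0.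
Proof. by rewrite /psum big_pred0 // => i; rewrite ltn0. Qed.
Lemma psumS' (s : {perm 'I_d}) (v : 'I_d -> R) n (h : (n < d)%N) :
  psum s v n.+1 = psum s v n + v (s (Ordinal h)).
Proof. by rewrite /psum (sumS (fun i => v (s i)) h). Qed.
Lemma psum_d (s : {perm 'I_d}) (v : 'I_d -> R) : psum s v d = \sum_i v i.
Proof.
rewrite /psum (eq_bigl xpredT); last by move=> i; rewrite ltn_ord.
by rewrite [RHS](reindex_inj (@perm_inj _ s)).
Qed.
Lemma psum_mono (s : {perm 'I_d}) m n : (m <= n)%N -> psum s g m <= psum s g n.
Proof.
move=> h; rewrite /psum [X in X <= _]big_mkcond [X in _ <= X]big_mkcond /=.
apply: ler_sum => i _; case: ifP => hi; first by rewrite (leq_trans hi h).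
by case: ifP => _ //; exact: ltW.
Qed.
Lemma psum_ge0 (s : {perm 'I_d}) n : 0 <= psum s g n.
Proof. rewrite /psum; apply: sumr_ge0 => i _; exact: ltW. Qed.
Lemma psum_le1 (s : {perm 'I_d}) n : psum s g n <= 1.
Proof.
have e : \sum_i g (s i) = 1 by rewrite -gsum [RHS](reindex_inj (@perm_inj _ s)).
rewrite -e /psum; by apply: sum_sub_le => i; exact: ltW.
Qed.

Definition ovs (s : {perm 'I_d}) (a : 'I_d) x := ov (psum s g a) (psum s g a.+1) 0 x.
Definition rho (s : {perm 'I_d}) (a : 'I_d) := p (s a) / g (s a).
Definition V (s : {perm 'I_d}) x := \sum_a rho s a * ovs s a x.

Lemma ov_full (s : {perm 'I_d}) (a : 'I_d) :
  ov (psum s g a) (psum s g a.+1) 0 1 = g (s a).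
Proof.
rewrite ov_in; last by apply: psum_le1.
  2: by apply: psum_ge0.
  2: by apply: psum_mono.
rewrite (psumS' s g (ltn_ord a)) /=; have -> : Ordinal (ltn_ord a) = a by apply: val_inj.
by rewrite addrC addKr.
Qed.

Lemma sum_ovs (s : {perm 'I_d}) x : 0 <= x -> x <= 1 -> \sum_a ovs s a x = x.
Proof.
move=> h0 h1; rewrite (eq_bigl (fun a : 'I_d => (a < d)%N)); last by move=> a; rewrite ltn_ord.
rewrite /ovs; under eq_bigr do rewrite ov_sym.
rewrite (ov_sum (C := fun n => psum s g n)) // ?psum0 ?psum_d ?gsum.
  by rewrite ov_in ?subr0 ?lexx.
by move=> n; apply: psum_mono.
Qed.

Lemma pivot (s : {perm 'I_d}) x : 0 <= x -> x <= 1 ->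
  exists k : 'I_d, psum s g k <= x /\ x <= psum s g k.+1.
Proof.
move=> h0 h1.
case: (boolP [exists k : 'I_d, (psum s g k <= x) && (x <= psum s g k.+1)]).
  by move/existsP => [k /andP [? ?]]; exists k.
move/existsPn => hk; exfalso.
have key : forall n (h : (n < d)%N), psum s g n.+1 < x.
  elim=> [|n IH] h.
    by have := hk (Ordinal h); rewrite /= psum0 h0 /= -ltNge.
  by have := hk (Ordinal h); rewrite /= (ltW (IH (ltnW h))) /= -ltNge.
have hdd : (d.-1 < d)%N by rewrite prednK.
have := key d.-1 hdd.
by rewrite prednK // psum_d gsum; lra.
Qed.

Lemma opt (s : {perm 'I_d}) (hs : beta_order g p s) x (hx0 : 0 <= x) (hx1 : x <= 1)
  (w : 'I_d -> R) (hw : forall j, 0 <= w j <= 1) (hsw : \sum_j g j * w j = x) :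
  \sum_j p j * w j <= V s x /\
  (\sum_j p j * w j = V s x -> (forall a b, a != b -> rho s a != rho s b) ->
   forall a, g (s a) * w (s a) = ovs s a x).
Proof.
have [k [hk1 hk2]] := pivot s hx0 hx1.
pose u a := ovs s a x - g (s a) * w (s a).
have hsu : \sum_a u a = 0.
  rewrite /u sumrB sum_ovs //.
  have -> : \sum_a g (s a) * w (s a) = x by rewrite -hsw [RHS](reindex_inj (@perm_inj _ s)).
  by rewrite subrr.
have hV : V s x - \sum_j p j * w j = \sum_a (rho s a - rho s k) * u a.
  under [RHS]eq_bigr do rewrite mulrBl.
  rewrite sumrB -mulr_sumr hsu mulr0 subr0.
  rewrite [X in _ - X](reindex_inj (@perm_inj _ s)) /V -sumrB.
  apply: eq_bigr => a _; rewrite /u /rho mulrBr; congr (_ - _).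
  by rewrite mulrA mulfVK ?gne0.
have terms : forall a, 0 <= (rho s a - rho s k) * u a.
  move=> a; case: (ltngtP a k) => hak.
  - have e : ovs s a x = g (s a).
      rewrite /ovs ov_in ?psum_ge0 //.
        rewrite (psumS' s g (ltn_ord a)) /=.
        have -> : Ordinal (ltn_ord a) = a by apply: val_inj.
        by rewrite addrC addKr.
      by apply: psum_mono.
      by apply: le_trans hk1; apply: psum_mono.
    apply: mulr_ge0.
      by rewrite subr_ge0; apply: hs; exact: ltnW.
    rewrite /u e -{1}(mulr1 (g (s a))) -mulrBr; apply: mulr_ge0; first exact: ltW.
    by rewrite subr_ge0; case/andP: (hw (s a)).
  - have e : ovs s a x = 0.
      rewrite /ovs ov_z2 //; apply: le_trans hk2 _; exact: psum_mono.
    apply: mulr_le0.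
      by rewrite subr_le0; apply: hs; exact: ltnW.
    rewrite /u e sub0r oppr_le0; apply: mulr_ge0; first exact: ltW.
    by case/andP: (hw (s a)).
  - have -> : a = k by apply: val_inj.
    by rewrite subrr mul0r.
split.
  by rewrite -subr_ge0 hV; apply: sumr_ge0 => a _; exact: terms.
move=> heq hdis.
have h0 : \sum_a (rho s a - rho s k) * u a = 0 by rewrite -hV heq subrr.
have hz := psumr_eq0P (fun a _ => terms a) h0.
have hu : forall a, u a = 0.
  apply: (@complete _ _ u (fun _ => 0) k); first by rewrite hsu big1.
  move=> a hak; have := hz a isT; move/eqP; rewrite mulf_eq0 => /orP [|/eqP //].
  by rewrite subr_eq0 (negbTE (hdis a k hak)).
move=> a; have := hu a; rewrite /u => /eqP; rewrite subr_eq0 => /eqP ->.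
by [].
Qed.

Definition W (s : {perm 'I_d}) x j := ovs s ((s^-1)%g j) x / g j.

Lemma Wfeas (s : {perm 'I_d}) x : 0 <= x -> x <= 1 ->
  (forall j, 0 <= W s x j <= 1) /\ \sum_j g j * W s x j = x /\
  \sum_j p j * W s x j = V s x.
Proof.
move=> h0 h1; split; [|split].
- move=> j; rewrite /W divr_ge0 ?ov_ge0 ?(ltW (gpos _)) //= ler_pdivrMr // mul1r.
  rewrite -{2}(permKV s j); set a := (s^-1)%g j.
  have -> : g (s a) = psum s g a.+1 - psum s g a.
    rewrite (psumS' s g (ltn_ord a)) /=.
    have -> : Ordinal (ltn_ord a) = a by apply: val_inj.
    by rewrite addrC addKr.
  by apply: ov_le; apply: psum_mono.
- under eq_bigr do rewrite /W mulrC mulfVK ?gne0 //.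
  by rewrite (reindex_inj (@perm_inj _ s)) /=; under eq_bigr do rewrite permK; rewrite sum_ovs.
- rewrite (reindex_inj (@perm_inj _ s)) /V; apply: eq_bigr => a _.
  by rewrite /W permK /rho mulrA mulrAC.
Qed.

Lemma Veq (s t : {perm 'I_d}) (hs : beta_order g p s) (ht : beta_order g p t) x :
  0 <= x -> x <= 1 -> V s x = V t x.
Proof.
move=> h0 h1.
have [ws [gs ps]] := Wfeas s h0 h1; have [wt [gt pt]] := Wfeas t h0 h1.
have [o1 _] := opt hs h0 h1 wt gt; have [o2 _] := opt ht h0 h1 ws gs.
rewrite pt in o1; rewrite ps in o2; apply/eqP; rewrite eq_le o1 o2 //.
Qed.

Lemma Vcurve (s : {perm 'I_d}) x (k : 'I_d) : psum s g k <= x -> x <= psum s g k.+1 ->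
  V s x = psum s p k + rho s k * (x - psum s g k).
Proof.
move=> hk1 hk2; rewrite /V (bigD1 k) //= addrC; congr (_ + _).
  rewrite /psum big_mkcond [RHS]big_mkcond /=; apply: eq_bigr => a _.
  case: (ltngtP a k) => hak.
  - have -> : (a != k) by rewrite -val_eqE /= ltn_eqF.
    rewrite /ovs ov_in ?psum_ge0 //.
    + rewrite (psumS' s g (ltn_ord a)) /=.
      have -> : Ordinal (ltn_ord a) = a by apply: val_inj.
      by rewrite addrC addKr /rho mulfVK ?gne0.
    + exact: psum_mono.
    + by apply: le_trans hk1; apply: psum_mono.
  - have -> : (a != k) by rewrite -val_eqE /= gtn_eqF.
    by rewrite /ovs ov_z2 ?mulr0 //; apply: le_trans hk2 _; exact: psum_mono.
  - have -> : a = k by apply: val_inj.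
    by rewrite eqxx.
by rewrite /ovs ov_mid ?psum_ge0.
Qed.

Lemma ovs_lt (s : {perm 'I_d}) x (a k : 'I_d) : (a < k)%N -> psum s g k <= x ->
  ovs s a x = g (s a).
Proof.
move=> hak hk1; rewrite /ovs ov_in ?psum_ge0 //.
- rewrite (psumS' s g (ltn_ord a)) /=.
  have -> : Ordinal (ltn_ord a) = a by apply: val_inj.
  by rewrite addrC addKr.
- by apply: psum_mono.
- by apply: le_trans hk1; apply: psum_mono.
Qed.
Lemma ovs_gt (s : {perm 'I_d}) x (a k : 'I_d) : (k < a)%N -> x <= psum s g k.+1 ->
  ovs s a x = 0.
Proof. move=> hak hk2; rewrite /ovs ov_z2 //; apply: le_trans hk2 _; exact: psum_mono. Qed.

Variables (lam mu : {perm 'I_d}).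
Definition Mf (b a : 'I_d) :=
  ov (psum lam g a) (psum lam g a.+1) (psum mu g b) (psum mu g b.+1).
Definition Tm : 'M[R]_d := \matrix_(i, j) (Mf ((mu^-1)%g i) ((lam^-1)%g j) / g j).

Lemma TmE b a : Tm (mu b) (lam a) = Mf b a / g (lam a).
Proof. by rewrite mxE !permK. Qed.

Lemma col_pref a n : (n <= d)%N -> \sum_(b < d | (b < n)%N) Mf b a =
  ov (psum lam g a) (psum lam g a.+1) 0 (psum mu g n).
Proof.
move=> hn; rewrite /Mf (ov_sum (C := fun m => psum mu g m)) ?psum0 //.
by move=> m; apply: psum_mono.
Qed.

Lemma col_full a : \sum_b Mf b a = g (lam a).
Proof.
rewrite (eq_bigl (fun b : 'I_d => (b < d)%N)); last by move=> b; rewrite ltn_ord.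
by rewrite col_pref // psum_d gsum ov_full.
Qed.

Lemma row_full b : \sum_a Mf b a = g (mu b).
Proof.
rewrite (eq_bigl (fun a : 'I_d => (a < d)%N)); last by move=> a; rewrite ltn_ord.
rewrite /Mf; under eq_bigr do rewrite ov_sym.
rewrite (ov_sum (C := fun m => psum lam g m)) ?psum0 ?psum_d ?gsum ?ov_full //.
by move=> m; apply: psum_mono.
Qed.

Lemma Tm_TP : in_TP g Tm.
Proof.
split; [|split].
- by move=> i j; rewrite mxE divr_ge0 ?ov_ge0 // ltW.
- move=> j; rewrite -(permKV lam j); set a := (lam^-1)%g j.
  rewrite (reindex_inj (@perm_inj _ mu)) /=; under eq_bigr do rewrite TmE.
  by rewrite -mulr_suml col_full divff ?gne0.
- apply: functional_extensionality => i; rewrite /mxapp -(permKV mu i).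
  set b := (mu^-1)%g i.
  rewrite (reindex_inj (@perm_inj _ lam)) /=.
  under eq_bigr do rewrite TmE (mulfVK (gne0 _)).
  by rewrite row_full.
Qed.

Lemma pref_Tm n : (n <= d)%N ->
  \sum_(b < d | (b < n)%N) mxapp Tm p (mu b) = V lam (psum mu g n).
Proof.
move=> hn; rewrite /mxapp exchange_big /= (reindex_inj (@perm_inj _ lam)) /= /V.
apply: eq_bigr => a _; under eq_bigr do rewrite TmE.
rewrite -mulr_suml -mulr_suml col_pref // /rho /ovs.
ring.
Qed.

Lemma Tm_app (r : 'I_d -> R)
  (hpr : forall n, (n <= d)%N -> psum mu r n = V lam (psum mu g n)) :
  mxapp Tm p = r.
Proof.
apply: functional_extensionality => i; rewrite -(permKV mu i); set b := (mu^-1)%g i.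
have h1 := hpr b.+1 (ltn_ord b); have h0 := hpr b (ltnW (ltn_ord b)).
rewrite -pref_Tm ?(ltn_ord b) // in h1; rewrite -pref_Tm ?(ltnW (ltn_ord b)) // in h0.
rewrite (psumS' mu r (ltn_ord b)) (sumS (fun b' => mxapp Tm p (mu b')) (ltn_ord b)) /= in h1.
have e : Ordinal (ltn_ord b) = b by apply: val_inj.
rewrite e h0 in h1; by move/addrI: h1.
Qed.

Lemma det (T1 : 'M[R]_d)
  (h : forall n, (n <= d)%N -> forall a, g (lam a) * \sum_(b < d | (b < n)%N) T1 (mu b) (lam a) =
     ov (psum lam g a) (psum lam g a.+1) 0 (psum mu g n)) : T1 = Tm.
Proof.
apply/matrixP => i j; rewrite -(permKV mu i) -(permKV lam j).
set b := (mu^-1)%g i; set a := (lam^-1)%g j; rewrite TmE.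
have h1 := h b.+1 (ltn_ord b) a; have h0 := h b (ltnW (ltn_ord b)) a.
rewrite (sumS (fun b' => T1 (mu b') (lam a)) (ltn_ord b)) /= in h1.
have e : Ordinal (ltn_ord b) = b by apply: val_inj.
rewrite e in h1.
have hadd := ov_add (psum lam g a) (psum lam g a.+1) (psum_ge0 mu b) (psum_mono mu (leqnSn b)).
rewrite -h0 -h1 mulrDr in hadd.
have hM : Mf b a = g (lam a) * T1 (mu b) (lam a) := addrI _ hadd.
by rewrite hM mulrAC divff ?gne0 // mul1r.
Qed.

Lemma wsum (T1 : 'M[R]_d) (v : 'I_d -> R) n :
  \sum_j v j * \sum_(b < d | (b < n)%N) T1 (mu b) j =
  \sum_(b < d | (b < n)%N) mxapp T1 v (mu b).
Proof.
rewrite /mxapp; under eq_bigr do rewrite mulr_sumr.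
rewrite exchange_big /=; apply: eq_bigr => b _; apply: eq_bigr => j _; exact: mulrC.
Qed.

Lemma supp (T1 : 'M[R]_d) (hT : in_TP g T1) (hs : forall i j, Tm i j = 0 -> T1 i j = 0) :
  T1 = Tm.
Proof.
case: hT => [hpos [hcol hg]].
apply: det => n hn a.
set x := psum mu g n.
have hx0 : 0 <= x by apply: psum_ge0.
have hx1 : x <= 1 by apply: psum_le1.
have [k [hk1 hk2]] := pivot lam hx0 hx1.
pose w j := \sum_(b < d | (b < n)%N) T1 (mu b) j.
apply: (complete (f := fun a => g (lam a) * w (lam a)) (h := fun a => ovs lam a x) (k := k)).
  rewrite sum_ovs //.
  transitivity (\sum_j g j * w j); first by rewrite [RHS](reindex_inj (@perm_inj _ lam)).
  by rewrite /w wsum hg.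
move=> a' hak; case: (ltngtP a' k) => h; last by move: hak; rewrite -val_eqE /= h eqxx.
- rewrite (ovs_lt h hk1).
  suff -> : w (lam a') = 1 by rewrite mulr1.
  have hall : \sum_b T1 (mu b) (lam a') = 1.
    by rewrite -(hcol (lam a')) [RHS](reindex_inj (@perm_inj _ mu)).
  rewrite -hall (bigID (fun b : 'I_d => (b < n)%N)) /= [X in _ = _ + X]big1 ?addr0 //.
  move=> b hb; apply: hs; rewrite TmE /Mf ov_z1 ?mul0r //.
  apply: le_trans (_ : psum lam g k <= _); first by apply: psum_mono.
  apply: le_trans hk1 _; apply: psum_mono; by rewrite leqNgt.
- rewrite (ovs_gt h hk2) /w big1 ?mulr0 // => b hb.
  apply: hs; rewrite TmE /Mf ov_z2 ?mul0r //.
  apply: le_trans (_ : psum mu g n <= _); first by apply: psum_mono.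
  by apply: le_trans hk2 _; apply: psum_mono.
Qed.

Lemma uniqT (T' : 'M[R]_d) (hT : in_TP g T') (hl : beta_order g p lam)
  (hdis : forall i j, i != j -> p i / g i != p j / g j) (r : 'I_d -> R)
  (happ : mxapp T' p = r)
  (hpr : forall n, (n <= d)%N -> psum mu r n = V lam (psum mu g n)) : T' = Tm.
Proof.
case: hT => [hpos [hcol hg]].
apply: det => n hn a.
set x := psum mu g n.
have hx0 : 0 <= x by apply: psum_ge0.
have hx1 : x <= 1 by apply: psum_le1.
pose w j := \sum_(b < d | (b < n)%N) T' (mu b) j.
have hw : forall j, 0 <= w j <= 1.
  move=> j; rewrite /w sumr_ge0 //=.
  apply: le_trans (sum_sub_le _ _) _; first by move=> i; apply: hpos.
  by rewrite -(hcol j) [X in _ <= X](reindex_inj (@perm_inj _ mu)).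
have hsw : \sum_j g j * w j = x by rewrite /w wsum hg.
have [_ heq] := opt hl hx0 hx1 hw hsw.
apply: heq.
  by rewrite /w wsum happ -/(psum mu r n) hpr.
move=> a1 a2 h; apply: hdis; by rewrite (inj_eq perm_inj).
Qed.

Lemma Tm_plain : plain_drawing Tm lam mu.
Proof.
move=> a a' b b' haa hbb h1 h2.
rewrite TmE pmulr_lgt0 ?invr_gt0 // in h1.
rewrite TmE pmulr_lgt0 ?invr_gt0 // in h2.
have [q1 q2] := ov_pos h1; have [q3 q4] := ov_pos h2.
have m1 := psum_mono lam haa; have m2 := psum_mono mu hbb.
lra.
Qed.

Lemma Tm_ext : extremal_TP g Tm.
Proof.
split; first exact: Tm_TP.
move=> T1 T2 t h1 h2 ht0 ht1 heq.
have key : forall i j, Tm i j = 0 -> T1 i j = 0 /\ T2 i j = 0.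
  move=> i j hz; have := congr1 (fun M : 'M[R]_d => M i j) heq; rewrite /= hz !mxE => /esym/eqP.
  rewrite paddr_eq0; first last.
  - by apply: mulr_ge0; [lra | case: h2 => ? _].
  - by apply: mulr_ge0; [lra | case: h1 => ? _].
  move=> /andP [e1 e2]; split.
  - move: e1; rewrite mulf_eq0 => /orP [/eqP ?|/eqP //]; lra.
  - move: e2; rewrite mulf_eq0 => /orP [/eqP ?|/eqP //]; lra.
by split; apply: supp => // i j hz; case: (key i j hz).
Qed.
End Sig.

From mathcomp Require exp.
Theorem mainTheorem8 (R : realType) (d : nat) (hd : (2 <= d)%N)
  (beta : R) (hbeta : 0 < beta) (E : 'I_d -> R) (i0 : 'I_d)
  (hi0 : nat_of_ord i0 = 0%N) (hE0 : E i0 = 0) (hEinj : injective E)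
  (p r : 'I_d -> R) (hp : is_state p) (hr : is_state r)
  (htight : tightly_thermomajorizes (gibbs beta E i0) p r) :
  exists T : 'M[R]_d,
    extremal_TP (gibbs beta E i0) T /\ biplanar (gibbs beta E i0) T /\
    mxapp T p = r /\
    (exists lam mu : {perm 'I_d},
       beta_order (gibbs beta E i0) p lam /\
       beta_order (gibbs beta E i0) r mu /\ plain_drawing T lam mu) /\
    ((forall i j : 'I_d, i != j ->
        p i / gibbs beta E i0 i != p j / gibbs beta E i0 j) ->
     forall T' : 'M[R]_d, in_TP (gibbs beta E i0) T' -> mxapp T' p = r ->
       T' = T).
Proof.
have hZ : 0 < \sum_j qf beta E j i0.
  apply: (lt_le_trans (exp.expR_gt0 _ : 0 < qf beta E i0 i0)).
  rewrite (bigD1 i0) //= lerDl sumr_ge0 // => j _; exact: ltW (exp.expR_gt0 _).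
set g := gibbs beta E i0.
have gpos : forall i, 0 < g i.
  by move=> i; rewrite /g /gibbs divr_gt0 // /qf exp.expR_gt0.
have gsum : \sum_i g i = 1.
  by rewrite /g /gibbs -mulr_suml divff // gt_eqF.
have hd0 : (0 < d)%N by apply: leq_trans hd.
case: htight => mu [hmu htk].
have [lam [hlam _]] := htk 0%N hd.
have hpr : forall n, (n <= d)%N -> psum mu r n = V g p lam (psum mu g n).
  move=> n; case: n => [|n] hn.
    rewrite !psum0 /V. rewrite big1 // => a _. by rewrite /ovs ov_uu mulr0.
  case: (ltngtP n.+1 d) => hnd; last first.
  - rewrite hnd !psum_d gsum (proj2 hr) /V.
    under eq_bigr do rewrite /ovs (ov_full gpos gsum) /rho (mulfVK (gne0 gpos _)).
    by rewrite -(proj2 hp) [LHS](reindex_inj (@perm_inj _ lam)).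
  - by rewrite ltnNge hn in hnd.
  have [pi [hpi [k [hk1 [hk2 hy]]]]] := htk n hnd.
  have hx0 : 0 <= psum mu g n.+1 by apply: psum_ge0.
  have hx1 : psum mu g n.+1 <= 1 by apply: psum_le1.
  rewrite hy -(Vcurve p gpos hk1 hk2).
  exact: (Veq gpos gsum hd0 hpi hlam hx0 hx1).
exists (Tm g lam mu).
have hext := Tm_ext gpos gsum hd0 lam mu.
split; first exact: hext.
split; first by split; [exact: hext | exists lam, mu; exact: Tm_plain].
split; first exact: Tm_app.
split; first by exists lam, mu; split; [|split] => //; exact: Tm_plain.
move=> hdis T' hT' happ; exact: (uniqT gpos gsum hd0 hT' hlam hdis happ hpr).
Qed.
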